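(* Let $n\ge2$ and let $Gr_n$ be the grid graph with vertex set $\{0,\dots,2^n\}^2$, edges between points at $\ell_1$-distance 1, and the $\ell_1$-metric. Let $T=\bigcup_{k=0}^{n-2}T_k$ with $T_k=\{1,2,3,4\}^k$ ($T_0=\{\emptyset\}$), and for $t\in T_k$ write $|t|=k$. Then there exist signed measures $\{\mu_t\}_{t\in T}$ on $V(Gr_n)$, each of total mass $0$, such that for every $t\in T$: (P1) $\mathrm{diam}(\mathrm{supp}(\mu_t))\le C_12^{n-|t|}$; (P2) for every $t'\in T\setminus\{t\}$, $\mathrm{dist}(\mathrm{supp}(\mu_t),\mathrm{supp}(\mu_{t'}))\ge C_2^{-1}2^{n-\max(|t|,|t'|)}$; (P3) $\|\mu_t\|_{\mathrm{TC}}\ge C_3^{-1}4^{-|t|}$; (P4) for every $A\subseteq V(Gr_n)$, $|\mu_t(A)|\le C_4\min\{2^{-n-1-|t|},\,4^{-n}(\mathrm{diam}(A)+1)\}$; (P5) there is $u\in V(Gr_n)$ such that $\mathrm{supp}(\mu_t)\cup\{u\}$ induces a connected subgraph of $Gr_n$; with $C_1=\tfrac12$, $C_2=4$, $C_3=16$, $C_4=1$.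
   Context: $\mathrm{supp}(\mu)=\{v:\mu(\{v\})\ne0\}$; diam and dist are with respect to the $\ell_1$-metric on $V(Gr_n)$. $\|\mu\|_{\mathrm{TC}}=\inf\sum_ia_i d(x_i,y_i)$ over representations $\mu=\sum_ia_i(\delta_{x_i}-\delta_{y_i})$ with $a_i\ge0$. *)

(* Defs.v *)
From HB Require Import structures.
From mathcomp Require Import all_boot all_order all_algebra.
From mathcomp Require Import classical_sets reals.
Set Implicit Arguments. Unset Strict Implicit. Unset Printing Implicit Defensive.
Import Order.TTheory GRing.Theory Num.Theory.
Local Open Scope ring_scope.

Definition V (n : nat) : finType := ('I_(2 ^ n).+1 * 'I_(2 ^ n).+1)%type.

Definition absdiff (a b : nat) : nat := ((a - b) + (b - a))%N.

Definition l1 {n : nat} (x y : V n) : nat :=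
  (absdiff (val x.1) (val y.1) + absdiff (val x.2) (val y.2))%N.

Definition adj {n : nat} : rel (V n) := fun x y => l1 x y == 1%N.

(* diameter of a set of vertices (0 for the empty set) *)
Definition diam {n : nat} (A : {set V n}) : nat :=
  \max_(x in A) \max_(y in A) l1 x y.

Definition induced_connected {n : nat} (S : {set V n}) : Prop :=
  forall x y, x \in S -> y \in S ->
    connect (fun a b => [&& a \in S, b \in S & adj a b]) x y.

Section Measures.
Variable R : realType.
Variable n : nat.

(* a signed measure on the finite set V(Gr_n) is given by its point masses *)
Definition meas (mu : V n -> R) (A : {set V n}) : R := \sum_(v in A) mu v.

Definition supp (mu : V n -> R) : {set V n} := [set v | mu v != 0].

(* representations mu = sum_i a_i (delta_{x_i} - delta_{y_i}), a_i >= 0 *)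
Definition is_TC_repr (mu : V n -> R) (s : seq (R * V n * V n)) : Prop :=
  (forall p, p \in s -> 0 <= p.1.1) /\
  (forall v, mu v = \sum_(p <- s) p.1.1 * ((p.1.2 == v)%:R - (p.2 == v)%:R)).

Definition TC_cost (s : seq (R * V n * V n)) : R :=
  \sum_(p <- s) p.1.1 * (l1 p.1.2 p.2)%:R.

Definition TCnorm (mu : V n -> R) : R :=
  inf [set c | exists s, is_TC_repr mu s /\ c = TC_cost s].
End Measures.

(* Main.v *)
Require Import Defs.
From HB Require Import structures.
From mathcomp Require Import all_boot all_order all_algebra.
From mathcomp Require Import classical_sets reals.
From mathcomp Require Import zify ring lra.
Import Order.TTheory GRing.Theory Num.Theory.
Local Open Scope ring_scope.

Fixpoint ox (N : nat) (t : seq 'I_4) : nat :=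
  match t with [::] => 0%N | q :: t' => ((q %% 2) * 2 ^ N.-1 + ox N.-1 t')%N end.
Fixpoint oy (N : nat) (t : seq 'I_4) : nat :=
  match t with [::] => 0%N | q :: t' => ((q %/ 2) * 2 ^ N.-1 + oy N.-1 t')%N end.

Lemma ox_prop N t : (size t <= N)%N ->
  (2 ^ (N - size t) %| ox N t)%N /\ (ox N t + 2 ^ (N - size t) <= 2 ^ N)%N.
Proof.
elim: t N => [|q t IH] N /=; first by rewrite subn0 add0n.
case: N => [//|N] hs; rewrite ltnS in hs; have [h1 h2] := IH N hs.
rewrite /= subSS; split.
  apply: dvdn_add => //; apply: dvdn_mull; apply: dvdn_exp2l; lia.
have : (q %% 2 <= 1)%N by rewrite -ltnS ltn_mod.
case: (q %% 2)%N => [|[|//]] _; rewrite expnS; lia.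
Qed.

Lemma oy_prop N t : (size t <= N)%N ->
  (2 ^ (N - size t) %| oy N t)%N /\ (oy N t + 2 ^ (N - size t) <= 2 ^ N)%N.
Proof.
elim: t N => [|q t IH] N /=; first by rewrite subn0 add0n.
case: N => [//|N] hs; rewrite ltnS in hs; have [h1 h2] := IH N hs.
rewrite /= subSS; split.
  apply: dvdn_add => //; apply: dvdn_mull; apply: dvdn_exp2l; lia.
have : (q %/ 2 <= 1)%N by rewrite -ltnS ltn_divLR //; have := ltn_ord q; lia.
case: (q %/ 2)%N => [|[|//]] _; rewrite expnS; lia.
Qed.

Lemma split_uniq (a a' B x x' : nat) : (a <= 1)%N -> (a' <= 1)%N -> (x < B)%N -> (x' < B)%N ->
  (a * B + x = a' * B + x')%N -> a = a' /\ x = x'.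
Proof. by case: a => [|[|//]]; case: a' => [|[|//]]; lia. Qed.

Lemma o_inj N t t' : (size t <= N)%N -> size t = size t' ->
  ox N t = ox N t' -> oy N t = oy N t' -> t = t'.
Proof.
elim: t t' N => [|q t IH] [|q' t'] N //= hs [es] ex ey.
case: N hs ex ey => [//|N] hs ex ey; rewrite ltnS in hs.
have hs' : (size t' <= N)%N by rewrite -es.
have [_ b1] := ox_prop _ _ hs; have [_ b2] := ox_prop _ _ hs'.
have [_ b3] := oy_prop _ _ hs; have [_ b4] := oy_prop _ _ hs'.
have p0 : (0 < 2 ^ (N - size t))%N by rewrite expn_gt0.
have p1 : (0 < 2 ^ (N - size t'))%N by rewrite expn_gt0.
have m1 : (q %% 2 <= 1)%N by rewrite -ltnS ltn_mod.
have m2 : (q' %% 2 <= 1)%N by rewrite -ltnS ltn_mod.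
have d1 : (q %/ 2 <= 1)%N by rewrite -ltnS ltn_divLR //; have := ltn_ord q; lia.
have d2 : (q' %/ 2 <= 1)%N by rewrite -ltnS ltn_divLR //; have := ltn_ord q'; lia.
move: ex ey => /= ex ey.
have l1 : (ox N t < 2 ^ N)%N by lia.
have l2 : (ox N t' < 2 ^ N)%N by lia.
have l3 : (oy N t < 2 ^ N)%N by lia.
have l4 : (oy N t' < 2 ^ N)%N by lia.
have [e1 e2] := split_uniq _ _ (2 ^ N) _ _ m1 m2 l1 l2 ex.
have [e3 e4] := split_uniq _ _ (2 ^ N) _ _ d1 d2 l3 l4 ey.
have -> : q = q' by apply: val_inj; rewrite /= (divn_eq q 2) (divn_eq q' 2) e1 e3.
by rewrite (IH t' N).
Qed.
Definition qq n (t : seq 'I_4) := (2 ^ (n - size t - 2))%N.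
Definition cx n t := (ox n t + 2 * qq n t)%N.
Definition cy n t := (oy n t + 2 * qq n t)%N.
Definition Pp n t j : V n := (inord (cx n t), inord (cy n t + j)).
Definition Nn n t j : V n := (inord (cx n t + j), inord (cy n t)).
Definition ee (R : realType) n : R := ((4:R) ^+ n)^-1.
Definition Sq (R : realType) n t : seq (R * V n * V n) :=
  [seq (ee R n, Pp n t j, Nn n t j) | j <- iota 1 (qq n t)].
Definition mu (R : realType) n t (v : V n) : R :=
  \sum_(p <- Sq R n t) p.1.1 * ((p.1.2 == v)%:R - (p.2 == v)%:R).

Lemma geo n t : (size t + 2 <= n)%N ->
  [/\ (4 * qq n t = 2 ^ (n - size t))%N, (2 ^ (n - size t) %| ox n t)%N,
      (2 ^ (n - size t) %| oy n t)%N, (ox n t + 4 * qq n t <= 2 ^ n)%N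
    & (oy n t + 4 * qq n t <= 2 ^ n)%N].
Proof.
move=> hs.
have e : (4 * qq n t = 2 ^ (n - size t))%N.
  rewrite /qq; have [d ->] : exists d, (n - size t = d.+2)%N by exists (n - size t - 2)%N; lia.
  by rewrite (_ : d.+2 - 2 = d)%N ?subn0 ?subnn ?expnS ?mulnA //; lia.
have hs' : (size t <= n)%N by lia.
have [a1 a2] := ox_prop _ _ hs'; have [b1 b2] := oy_prop _ _ hs'.
by split => //; rewrite e.
Qed.

Lemma qq_gt0 n t : (0 < qq n t)%N.
Proof. by rewrite /qq expn_gt0. Qed.

Lemma vals n t j : (size t + 2 <= n)%N -> (j <= qq n t)%N ->
  [/\ val (Pp n t j).1 = cx n t, val (Pp n t j).2 = (cy n t + j)%N,
      val (Nn n t j).1 = (cx n t + j)%N & val (Nn n t j).2 = cy n t].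
Proof.
move=> hs hj; have [e _ _ b1 b2] := geo _ _ hs.
rewrite /Pp /Nn /cx /cy /=; rewrite !inordK //; lia.
Qed.

Lemma sum_delta (R : realType) n (f : V n -> R) (x : V n) :
  \sum_v f v * (x == v)%:R = f x.
Proof.
rewrite (bigD1 x) //= eqxx mulr1 big1 ?addr0 // => v /negbTE.
by rewrite eq_sym => ->; rewrite mulr0.
Qed.

Lemma sum_repr (R : realType) n (s : seq (R * V n * V n)) (f : V n -> R) :
  \sum_v f v * (\sum_(p <- s) p.1.1 * ((p.1.2 == v)%:R - (p.2 == v)%:R)) =
  \sum_(p <- s) p.1.1 * (f p.1.2 - f p.2).
Proof.
under eq_bigr do rewrite big_distrr.
rewrite exchange_big; apply: eq_bigr => p _ /=.
under eq_bigr do rewrite mulrCA mulrBr.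
by rewrite -mulr_sumr sumrB !sum_delta.
Qed.

Lemma supp_mu (R : realType) n t v : v \in supp (mu R n t) ->
  exists j, [/\ (1 <= j)%N, (j <= qq n t)%N & v = Pp n t j \/ v = Nn n t j].
Proof.
rewrite inE /mu /Sq big_map.
case: (boolP (has (fun j => (Pp n t j == v) || (Nn n t j == v)) (iota 1 (qq n t)))).
  move=> /hasP [j]; rewrite mem_iota => /andP [h1 h2] /orP [] /eqP <- _;
  exists j; split => //; try lia; by [left|right].
move=> /hasPn H; rewrite big1_seq ?eqxx // => j /andP [_ hj].
by move: (H j hj); rewrite negb_or => /andP [/negbTE -> /negbTE ->]; rewrite subrr mulr0.
Qed.

Lemma absdiffC a b : absdiff a b = absdiff b a.
Proof. by rewrite /absdiff addnC. Qed.

Lemma l1C n (x y : V n) : l1 x y = l1 y x.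
Proof. by rewrite /l1 absdiffC [absdiff (val x.2) _]absdiffC. Qed.

Lemma lemB Q a b r : (4 * Q %| a)%N -> (4 * Q %| b)%N -> (2 * Q <= r <= 3 * Q)%N ->
  (Q <= absdiff a (b + r))%N.
Proof.
move=> /dvdnP [c ->] /dvdnP [d ->] /andP [h1 h2]; rewrite /absdiff.
case: (leqP c d) => h.
  have := leq_mul h (leqnn (4 * Q)); lia.
have := leq_mul h (leqnn (4 * Q)); rewrite mulSn; lia.
Qed.

Lemma lemA Q a b r r' : (4 * Q %| a)%N -> (4 * Q %| b)%N -> a <> b ->
  (2 * Q <= r <= 3 * Q)%N -> (2 * Q <= r' <= 3 * Q)%N ->
  (Q <= absdiff (a + r) (b + r'))%N.
Proof.
move=> /dvdnP [c ->] /dvdnP [d ->] hne /andP [h1 h2] /andP [h3 h4]; rewrite /absdiff.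
case: (ltngtP c d) => h.
- have := leq_mul h (leqnn (4 * Q)); rewrite mulSn; lia.
- have := leq_mul h (leqnn (4 * Q)); rewrite mulSn; lia.
- by subst.
Qed.

Lemma cnt (p : pred nat) D lo N :
  (forall i j, i \in iota lo N -> j \in iota lo N -> p i -> p j -> (j <= i + D)%N) ->
  (count p (iota lo N) <= D.+1)%N.
Proof.
elim: N lo => [|N IH] lo H //=.
case: (boolP (p lo)) => hp /=.
  rewrite add1n ltnS -size_filter.
  apply: leq_trans (uniq_leq_size (s2 := iota lo.+1 D) _ _) _.
  - exact: filter_uniq (iota_uniq _ _).
  - move=> j; rewrite mem_filter => /andP [pj hj].
    have := H lo j; rewrite !inE eqxx hj orbT => /(_ isT isT hp pj).
    move: hj; rewrite !mem_iota; lia.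
  - by rewrite size_iota.
rewrite add0n; apply: IH => i j hi hj; apply: H; rewrite inE ?hi ?hj orbT //.
Qed.

Lemma pt (R : realType) n t v : (size t + 2 <= n)%N -> v \in supp (mu R n t) ->
  exists r1 r2, [/\ val v.1 = (ox n t + r1)%N, val v.2 = (oy n t + r2)%N,
    (2 * qq n t <= r1 <= 3 * qq n t)%N, (2 * qq n t <= r2 <= 3 * qq n t)%N
    & r1 = (2 * qq n t)%N \/ r2 = (2 * qq n t)%N].
Proof.
move=> hs /supp_mu [j [h1 h2 [->|->]]]; have [a1 a2 a3 a4] := vals n t j hs h2.
- exists (2 * qq n t)%N, (2 * qq n t + j)%N; rewrite a1 a2 /cx /cy; split; try lia; by left.
- exists (2 * qq n t + j)%N, (2 * qq n t)%N; rewrite a3 a4 /cx /cy; split; try lia; by right.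
Qed.

Lemma coarse_fine (R : realType) n t t' x y : (size t + 2 <= n)%N -> (size t' + 2 <= n)%N ->
  (size t < size t')%N -> x \in supp (mu R n t) -> y \in supp (mu R n t') ->
  (qq n t' <= l1 x y)%N.
Proof.
move=> hs hs' hlt hx hy.
have [e1 d1 d2 _ _] := geo _ _ hs; have [e1' d1' d2' _ _] := geo _ _ hs'.
have dv : (4 * qq n t' %| 2 ^ (n - size t))%N by rewrite e1'; apply: dvdn_exp2l; clear -hlt hs hs'; lia.
have dv2 : (4 * qq n t' %| 2 * qq n t)%N.
  rewrite e1' /qq -expnS; apply: dvdn_exp2l; clear -hlt hs hs'; lia.
have [r1 [r2 [x1 x2 hr1 hr2 hor]]] := pt _ _ _ _ hs hx.
have [s1 [s2 [y1 y2 hs1 hs2 _]]] := pt _ _ _ _ hs' hy.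
rewrite /l1; case: hor => hr.
- have : (qq n t' <= absdiff (val x.1) (val y.1))%N.
    rewrite x1 y1 hr; apply: lemB => //; last by rewrite e1'.
    by apply: dvdn_add => //; apply: dvdn_trans dv d1.
  by move=> h; apply: leq_trans h (leq_addr _ _).
- have : (qq n t' <= absdiff (val x.2) (val y.2))%N.
    rewrite x2 y2 hr; apply: lemB => //; last by rewrite e1'.
    by apply: dvdn_add => //; apply: dvdn_trans dv d2.
  by move=> h; apply: leq_trans h (leq_addl _ _).
Qed.

Lemma sep (R : realType) n t t' x y : (size t + 2 <= n)%N -> (size t' + 2 <= n)%N ->
  t' != t -> x \in supp (mu R n t) -> y \in supp (mu R n t') ->
  (2 ^ (n - maxn (size t) (size t')) <= 4 * l1 x y)%N.
Proof.
move=> hs hs' hne hx hy.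
case: (ltngtP (size t) (size t')) => hlt.
- have [e1' _ _ _ _] := geo _ _ hs'.
  rewrite -e1' leq_pmul2l //; exact: coarse_fine _ _ _ _ _ _ hs hs' hlt hx hy.
- have [e1 _ _ _ _] := geo _ _ hs.
  rewrite -e1 leq_pmul2l // l1C; exact: coarse_fine _ _ _ _ _ _ hs' hs hlt hy hx.
- have [e1 d1 d2 _ _] := geo _ _ hs; have [e1' d1' d2' _ _] := geo _ _ hs'.
  have eq : qq n t' = qq n t by rewrite /qq hlt.
  rewrite ?hlt -e1' leq_pmul2l // eq.
  have [r1 [r2 [x1 x2 hr1 hr2 _]]] := pt _ _ _ _ hs hx.
  have [s1 [s2 [y1 y2 hs1 hs2 _]]] := pt _ _ _ _ hs' hy.
  rewrite eq in hs1 hs2; rewrite -e1' eq in d1' d2'; rewrite -e1 in d1 d2.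
  have : ox n t <> ox n t' \/ oy n t <> oy n t'.
    case: (eqVneq (ox n t) (ox n t')) => [ex|/eqP]; last by left.
    case: (eqVneq (oy n t) (oy n t')) => [ey|/eqP]; last by right.
    have hsn : (size t <= n)%N by apply: leq_trans hs; apply: leq_addr.
    have tt : t = t' := o_inj n t t' hsn hlt ex ey.
    by move: hne; rewrite tt => /eqP H; exfalso; apply: H.
  rewrite /l1 x1 x2 y1 y2 => -[] h.
  + exact: leq_trans (lemA _ _ _ _ _ d1 d1' h hr1 hs1) (leq_addr _ _).
  + exact: leq_trans (lemA _ _ _ _ _ d2 d2' h hr2 hs2) (leq_addl _ _).
Qed.

Lemma mu_total (R : realType) n t : \sum_v mu R n t v = 0.
Proof.
have := sum_repr R n (Sq R n t) (fun _ => 1).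
under eq_bigr do rewrite mul1r.
by move=> ->; rewrite big1 // => p _; rewrite subrr mulr0.
Qed.

Lemma diam_ge n (A : {set V n}) x y : x \in A -> y \in A -> (l1 x y <= diam A)%N.
Proof.
move=> hx hy; rewrite /diam.
apply: leq_trans (leq_bigmax_cond _ hx).
exact: (leq_bigmax_cond _ hy).
Qed.

Lemma diam_supp (R : realType) n t : (size t + 2 <= n)%N ->
  (diam (supp (mu R n t)) <= 2 * qq n t)%N.
Proof.
move=> hs; apply/bigmax_leqP => x hx; apply/bigmax_leqP => y hy.
have [i [i1 i2 hi]] := supp_mu R n t x hx; have [j [j1 j2 hj]] := supp_mu R n t y hy.
have [a1 a2 a3 a4] := vals n t i hs i2; have [b1 b2 b3 b4] := vals n t j hs j2.
clear hx hy; rewrite /l1 /absdiff.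
by case: hi => ->; case: hj => ->; rewrite ?a1 ?a2 ?a3 ?a4 ?b1 ?b2 ?b3 ?b4; clear -i1 i2 j1 j2; lia.
Qed.

Definition fpot (R : realType) n (v : V n) : R := (val v.2)%:R - (val v.1)%:R.

Lemma absd_ge (R : realType) a b : (a%:R - b%:R : R) <= (absdiff a b)%:R.
Proof.
have : (a <= absdiff a b + b)%N by rewrite /absdiff; lia.
rewrite -(ler_nat R) natrD => h; lra.
Qed.

Lemma f_le (R : realType) n (x y : V n) : fpot R n x - fpot R n y <= (l1 x y)%:R.
Proof.
rewrite /fpot /l1 natrD.
have := absd_ge R (val x.2) (val y.2); have := absd_ge R (val y.1) (val x.1).
rewrite absdiffC; lra.
Qed.

Lemma gauss q : (q * q <= 2 * \sum_(j <- iota 1 q) j)%N.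
Proof.
elim: q => [|q IH]; first by [].
rewrite -addn1 iotaD big_cat big_seq1 /=; lia.
Qed.

Lemma sum_count (R : realType) (T : Type) (b : pred T) (s : seq T) :
  \sum_(j <- s) ((b j)%:R : R) = (count b s)%:R.
Proof. by elim: s => [|x s IH]; rewrite ?big_nil ?big_cons //= IH natrD. Qed.

Lemma num1 (R : realType) n k : (k + 2 <= n)%N ->
  ((4:R) ^+ n)^-1 * (2 ^ (n - k - 2))%:R <= ((2:R) ^+ (n + 1 + k))^-1.
Proof.
move=> h; have [d ->] : exists d, n = (d + 2 + k)%N by exists (n - k - 2)%N; lia.
have -> : (d + 2 + k - k - 2 = d)%N by lia.
set X := (2:R) ^+ (d + 2 + k + 1 + k).
have hX : 0 < X by rewrite exprn_gt0.
have -> : (4:R) ^+ (d + 2 + k) = (2:R) ^+ d * X * 2 ^+ 1.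
  rewrite /X -!exprD (_ : (4:R) = 2 ^+ 2); last by rewrite expr2 -natrM.
  by rewrite -exprM; congr (_ ^+ _); lia.
rewrite natrX.
have h2 : (2:R) ^+ d != 0 by rewrite gt_eqF // exprn_gt0.
have hX2 : X != 0 by rewrite gt_eqF.
have -> : (2 ^+ d * X * 2 ^+ 1)^-1 * (2%:R) ^+ d = X^-1 / 2 :> R.
  by rewrite expr1; field; rewrite ?h2 ?hX2.
have : 0 < X^-1 by rewrite invr_gt0.
lra.
Qed.

Lemma num2 (R : realType) n k : (k + 2 <= n)%N ->
  ((4:R) ^+ n)^-1 * ((2 ^ (n - k - 2)) * (2 ^ (n - k - 2)))%:R = (16:R)^-1 * ((4:R) ^+ k)^-1.
Proof.
move=> h; have [d ->] : exists d, n = (d + 2 + k)%N by exists (n - k - 2)%N; lia.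
have -> : (d + 2 + k - k - 2 = d)%N by lia.
have e4 : (4:R) ^+ (d + 2 + k) = ((2:R) ^+ d * 2 ^+ d) * 16 * 4 ^+ k.
  rewrite -exprMn (_ : (2:R) * 2 = 4); last by rewrite -natrM.
  rewrite (_ : (16:R) = 4 ^+ 2); last by rewrite expr2 -natrM.
  by rewrite -!exprD.
have h2 : (2:R) ^+ d != 0 by rewrite gt_eqF // exprn_gt0.
have h4 : (4:R) ^+ k != 0 by rewrite gt_eqF // exprn_gt0.
rewrite e4 natrM natrX; field.
by rewrite h2 h4.
Qed.

Lemma TC_lb (R : realType) n t : (size t + 2 <= n)%N ->
  (16 : R)^-1 * (4 : R) ^- (size t) <= TCnorm (mu R n t).
Proof.
move=> hs.
set B := \sum_(p <- Sq R n t) p.1.1 * (fpot R n p.1.2 - fpot R n p.2).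
have key : forall s, is_TC_repr (mu R n t) s -> B <= TC_cost s.
  move=> s [hpos hrep].
  have e1 : \sum_v fpot R n v * mu R n t v = \sum_(p <- s) p.1.1 * (fpot R n p.1.2 - fpot R n p.2).
    under eq_bigr do rewrite hrep; exact: sum_repr.
  have e2 : \sum_v fpot R n v * mu R n t v = B by exact: sum_repr.
  rewrite -e2 e1 /TC_cost big_seq [X in _ <= X]big_seq; apply: ler_sum => p hp.
  by apply: ler_wpM2l; [exact: hpos|exact: f_le].
have bnd : (16 : R)^-1 * (4 : R) ^- (size t) <= B.
  have eB : B = ee R n * (2 * \sum_(j <- iota 1 (qq n t)) j)%N%:R.
    rewrite /B /Sq big_map (eq_big_seq (fun j => ee R n * (2 * j%:R))); last first.
      move=> j; rewrite mem_iota => hj /=.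
      have hj' : (j <= qq n t)%N by clear -hj; lia.
      have [a1 a2 a3 a4] := vals n t j hs hj'.
      rewrite /fpot a1 a2 a3 a4 !natrD; congr (_ * _); lra.
    by rewrite -mulr_sumr natrM natr_sum -mulr_sumr.
  rewrite eB -(num2 R n (size t)) //; apply: ler_wpM2l; first by rewrite /ee invr_ge0 exprn_ge0.
  rewrite ler_nat /qq; exact: gauss.
apply: le_trans bnd (lb_le_inf _ _).
  exists (TC_cost (Sq R n t)), (Sq R n t); split => //; split => //.
  by move=> p /mapP [j _ ->] /=; rewrite /ee invr_ge0 exprn_ge0.
by move=> c [s [hs' ->]]; exact: key.
Qed.

Lemma normB_le (R : realType) (a b M : nat) : (a <= M)%N -> (b <= M)%N ->
  `|a%:R - b%:R| <= (M%:R : R).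
Proof.
rewrite -!(ler_nat R) => ha hb.
have := ler0n R a; have := ler0n R b.
rewrite ler_norml => h1 h2; apply/andP; split; lra.
Qed.

Lemma mass (R : realType) n t (A : {set V n}) : (size t + 2 <= n)%N ->
  `|meas (mu R n t) A| <=
    (1 : R) * Num.min ((2 : R) ^- (n + 1 + size t)) ((4 : R) ^- n * ((diam A)%:R + 1)).
Proof.
move=> hs.
set ca := count (fun j => Pp n t j \in A) (iota 1 (qq n t)).
set cb := count (fun j => Nn n t j \in A) (iota 1 (qq n t)).
have hm : meas (mu R n t) A = ee R n * (ca%:R - cb%:R).
  rewrite /meas big_mkcond /=.
  transitivity (\sum_v ((v \in A)%:R : R) * mu R n t v).
    by apply: eq_bigr => v _; case: (v \in A); rewrite ?mul1r ?mul0r.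
  by rewrite sum_repr /Sq big_map -mulr_sumr sumrB !sum_count.
have ca1 : (ca <= qq n t)%N by rewrite /ca (leq_trans (count_size _ _)) // size_iota.
have cb1 : (cb <= qq n t)%N by rewrite /cb (leq_trans (count_size _ _)) // size_iota.
have ca2 : (ca <= (diam A).+1)%N.
  apply: cnt => i j hi hj pi pj.
  have := diam_ge _ _ _ _ pi pj.
  move: hi hj; rewrite !mem_iota => hi hj.
  have [a1 a2 a3 a4] := vals n t i hs (ltac:(clear -hi; lia)).
  have [b1 b2 b3 b4] := vals n t j hs (ltac:(clear -hj; lia)).
  rewrite /l1 ?a1 ?a2 ?b1 ?b2 /absdiff; clear; lia.
have cb2 : (cb <= (diam A).+1)%N.
  apply: cnt => i j hi hj pi pj.
  have := diam_ge _ _ _ _ pi pj.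
  move: hi hj; rewrite !mem_iota => hi hj.
  have [a1 a2 a3 a4] := vals n t i hs (ltac:(clear -hi; lia)).
  have [b1 b2 b3 b4] := vals n t j hs (ltac:(clear -hj; lia)).
  rewrite /l1 ?a3 ?a4 ?b3 ?b4 /absdiff; clear; lia.
have he : 0 <= ee R n by rewrite /ee invr_ge0 exprn_ge0.
rewrite hm normrM ger0_norm // mul1r le_min; apply/andP; split.
  apply: le_trans (num1 R n (size t) hs).
  by apply: ler_wpM2l => //; exact: normB_le.
apply: ler_wpM2l => //; rewrite natr1; exact: normB_le.
Qed.

Lemma PpE n t i j : (size t + 2 <= n)%N -> (i <= qq n t)%N -> (j <= qq n t)%N ->
  (Pp n t i == Pp n t j) = (i == j).
Proof.
move=> hs hi hj; apply/eqP/eqP => [h|->//].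
have [a1 a2 a3 a4] := vals n t i hs hi; have [b1 b2 b3 b4] := vals n t j hs hj.
have := congr1 (fun v : V n => nat_of_ord v.2) h; rewrite /= a2 b2; clear; lia.
Qed.

Lemma NnE n t i j : (size t + 2 <= n)%N -> (i <= qq n t)%N -> (j <= qq n t)%N ->
  (Nn n t i == Nn n t j) = (i == j).
Proof.
move=> hs hi hj; apply/eqP/eqP => [h|->//].
have [a1 a2 a3 a4] := vals n t i hs hi; have [b1 b2 b3 b4] := vals n t j hs hj.
have := congr1 (fun v : V n => nat_of_ord v.1) h; rewrite /= a3 b3; clear; lia.
Qed.

Lemma NPE n t i j : (size t + 2 <= n)%N -> (1 <= i <= qq n t)%N -> (j <= qq n t)%N ->
  (Nn n t i == Pp n t j) = false.
Proof.
move=> hs /andP [hi1 hi] hj; apply/negbTE/eqP => h.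
have [a1 a2 a3 a4] := vals n t i hs hi; have [b1 b2 b3 b4] := vals n t j hs hj.
have := congr1 (fun v : V n => nat_of_ord v.1) h; rewrite /= a3 b1; clear -hi1; lia.
Qed.

Lemma mu_Pp (R : realType) n t j : (size t + 2 <= n)%N -> (1 <= j <= qq n t)%N ->
  mu R n t (Pp n t j) = ee R n.
Proof.
move=> hs /andP [hj1 hj].
rewrite /mu /Sq big_map (eq_big_seq (fun i => ee R n * (i == j)%:R)); last first.
  move=> i; rewrite mem_iota => hi /=.
  rewrite PpE ?NPE ?subr0 //; clear -hi; lia.
have hjm : j \in iota 1 (qq n t) by rewrite mem_iota; clear -hj hj1; lia.
rewrite (bigD1_seq j) ?iota_uniq //= eqxx mulr1.
rewrite big1 ?addr0 // => i /negbTE ->; by rewrite mulr0.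
Qed.

Lemma mu_Nn (R : realType) n t j : (size t + 2 <= n)%N -> (1 <= j <= qq n t)%N ->
  mu R n t (Nn n t j) = - ee R n.
Proof.
move=> hs /andP [hj1 hj].
rewrite /mu /Sq big_map (eq_big_seq (fun i => - (ee R n * (i == j)%:R))); last first.
  move=> i; rewrite mem_iota => hi /=.
  have hi' : (i <= qq n t)%N by clear -hi; lia.
  rewrite NnE // (eq_sym (Pp n t i)) NPE ?sub0r ?mulrN //.
  by apply/andP.
have hjm : j \in iota 1 (qq n t) by rewrite mem_iota; clear -hj hj1; lia.
rewrite sumrN (bigD1_seq j) ?iota_uniq //= eqxx mulr1.
rewrite big1 ?addr0 // => i /negbTE ->; by rewrite mulr0.
Qed.

Lemma conn (R : realType) n t : (size t + 2 <= n)%N ->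
  exists u : V n, induced_connected (u |: supp (mu R n t)).
Proof.
move=> hs; exists (Pp n t 0); move=> x y hx hy.
set S := Pp n t 0 |: supp (mu R n t).
set E := (fun a b : V n => [&& a \in S, b \in S & adj a b]).
have symE : symmetric E by move=> a b; rewrite /E /adj l1C andbCA.
have ee0 : ee R n != 0 by rewrite /ee invr_eq0 gt_eqF // exprn_gt0.
have inP : forall j, (j <= qq n t)%N -> Pp n t j \in S.
  case=> [|j] hj; first by rewrite setU11.
  by rewrite /S !inE mu_Pp ?ee0 ?orbT //; clear -hj; lia.
have inN : forall j, (1 <= j <= qq n t)%N -> Nn n t j \in S.
  by move=> j hj; rewrite /S !inE mu_Nn ?oppr_eq0 ?ee0 ?orbT.
have pathP : forall j, (j <= qq n t)%N -> connect E (Pp n t 0) (Pp n t j).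
  elim=> [|j IH] hj; first exact: connect0.
  apply: connect_trans (IH (ltnW hj)) (connect1 _).
  rewrite /E inP ?inP ?(ltnW hj) //= /adj /l1.
  have [a1 a2 _ _] := vals n t j hs (ltnW hj); have [b1 b2 _ _] := vals n t j.+1 hs hj.
  by rewrite ?a1 ?a2 ?b1 ?b2 /absdiff; apply/eqP; clear; lia.
have pathN : forall j, (j < qq n t)%N -> connect E (Pp n t 0) (Nn n t j.+1).
  have [a1 a2 _ _] := vals n t 0 hs (leq0n _).
  elim=> [|j IH] hj.
    have h1q : (1 <= 1 <= qq n t)%N by apply/andP.
    apply: connect1; rewrite /E inP ?(inN 1 h1q) //=.
    have [_ _ b1 b2] := vals n t 1 hs hj.
    by rewrite /adj /l1 ?a1 ?a2 ?b1 ?b2 /absdiff; apply/eqP; clear; lia.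
  apply: connect_trans (IH (ltnW hj)) (connect1 _).
  have h1 : (0 < j.+1 <= qq n t)%N by apply/andP; split => //; exact: ltnW.
  have h2 : (0 < j.+2 <= qq n t)%N by apply/andP; split.
  rewrite /E (inN _ h1) (inN _ h2) /=.
  have [_ _ c1 c2] := vals n t j.+1 hs (ltnW hj); have [_ _ b1 b2] := vals n t j.+2 hs hj.
  by rewrite /adj /l1 ?c1 ?c2 ?b1 ?b2 /absdiff; apply/eqP; clear; lia.
have all : forall z, z \in S -> connect E (Pp n t 0) z.
  move=> z; rewrite /S !inE => /orP [/eqP ->|hz]; first exact: connect0.
  have hz' : z \in supp (mu R n t) by rewrite inE.
  have [j [j1 j2 [->|->]]] := supp_mu R n t z hz'; first exact: pathP.
  by case: j j1 j2 => [//|j] _ j2; apply: pathN.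
apply: (@connect_trans _ E (Pp n t 0)); last exact: all.
by rewrite (sym_connect_sym symE); exact: all.
Qed.

Theorem theorem3p1 (R : realType) (n : nat) (hn : (2 <= n)%N) :
  exists mu : seq 'I_4 -> V n -> R,
    forall t : seq 'I_4, (size t <= n - 2)%N ->
      (\sum_(v : V n) mu t v = 0) /\
      (* (P1) *)
      ((diam (supp (mu t)))%:R <= (2 : R)^-1 * (2 : R) ^+ (n - size t)) /\
      (* (P2) *)
      (forall t' : seq 'I_4, (size t' <= n - 2)%N -> t' != t ->
         forall x y, x \in supp (mu t) -> y \in supp (mu t') ->
           (4 : R)^-1 * (2 : R) ^+ (n - maxn (size t) (size t')) <= (l1 x y)%:R) /\
      (* (P3) *)
      ((16 : R)^-1 * (4 : R) ^- (size t) <= TCnorm (mu t)) /\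
      (* (P4) *)
      (forall A : {set V n},
         `|meas (mu t) A| <=
           (1 : R) * Num.min ((2 : R) ^- (n + 1 + size t)) ((4 : R) ^- n * ((diam A)%:R + 1))) /\
      (* (P5) *)
      (exists u : V n, induced_connected (u |: supp (mu t))).
Proof.
exists (mu R n) => t ht.
have hs : (size t + 2 <= n)%N by clear -hn ht; lia.
have [e1 _ _ _ _] := geo n t hs.
split; first exact: mu_total.
split.
  have := diam_supp R n t hs; rewrite -(ler_nat R) => h.
  apply: le_trans h _; rewrite -natrX -e1 !natrM.
  have := ler0n R (qq n t); lra.
split.
  move=> t' ht' hne x y hx hy.
  have hs' : (size t' + 2 <= n)%N by clear -hn ht'; lia.
  have := sep R n t t' x y hs hs' hne hx hy.
  rewrite -(ler_nat R) natrM natrX => h; lra.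
split; first exact: TC_lb.
split; first by move=> A; exact: mass.
exact: conn.
Qed.
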